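(* Let $S_1,S_2$ be numerical semigroups and $a_1,a_2$ coprime positive integers with $a_2\in S_1$ and $a_1\in S_2$, and let $S=a_1S_1+a_2S_2$. For $i=1,2$ put $Q_i(x)=\mathrm P_S(x)/\mathrm P_{S_i}(x^{a_i})$. Then $Q_i(0)=1$, $Q_i(x)$ is a monic polynomial, and its nonzero coefficients alternate between $1$ and $-1$.
   Context: A numerical semigroup is a submonoid of $(\mathbb N,+)$ with finite complement in $\mathbb N$; $aA=\{ax:x\in A\}$, $A+B=\{x+y:x\in A,y\in B\}$. For a numerical semigroup $T$, $\mathrm P_T(x)=(1-x)\sum_{t\in T}x^t$. (In the paper, $S$ is called the gluing $a_1S_1+_{a_1a_2}a_2S_2$.) *)

(* Defs.v *)
From mathcomp Require Import all_boot all_order all_algebra.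
Set Implicit Arguments. Unset Strict Implicit. Unset Printing Implicit Defensive.
Import GRing.Theory Num.Theory.
Local Open Scope ring_scope.

Definition numerical_semigroup (T : pred nat) : Prop :=
  [/\ T 0%N,
      (forall x y, T x -> T y -> T (x + y)%N)
    & exists N : nat, forall n, (N <= n)%N -> T n].

(* a1 A + a2 B = { a1 x + a2 y : x in A, y in B }.  Since a1 > 0 in the
   use below, any witness x satisfies x <= n, so the search is bounded. *)
Definition gluing (a1 : nat) (A : pred nat) (a2 : nat) (B : pred nat) : pred nat :=
  fun n => [exists x : 'I_n.+1, [exists y : 'I_n.+1,
             [&& A x, B y & (a1 * x + a2 * y)%N == n]]].

Definition pseries := nat -> int.

(* P_T(x) = (1 - x) * sum_{t in T} x^t, coefficientwise:
   coefficient of x^k is [k in T] - [k-1 in T]. *)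
Definition PT (T : pred nat) : pseries :=
  fun k => (T k)%:Z - (if k is k'.+1 then (T k')%:Z else 0).

(* f(x^a) for a > 0. *)
Definition subst_pow (a : nat) (f : pseries) : pseries :=
  fun k => if (a %| k)%N then f (k %/ a)%N else 0.

Definition polyXser (q : {poly int}) (f : pseries) : pseries :=
  fun n => \sum_(i < n.+1) q`_i * f (n - i)%N.

Definition alternating_coefs (q : {poly int}) : Prop :=
  (forall i, q`_i != 0 -> q`_i = 1 \/ q`_i = -1) /\
  (forall i j, (i < j)%N -> q`_i != 0 -> q`_j != 0 ->
     (forall k, (i < k < j)%N -> q`_k = 0) -> q`_j = - q`_i).

(* Main.v *)
Require Import Defs.
From mathcomp Require Import all_boot all_order all_algebra zify.
From Stdlib Require Import FunctionalExtensionality.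
Import GRing.Theory Num.Theory.

Lemma gluingP a b (A B : pred nat) n : 0 < a -> 0 < b ->
  gluing a A b B n <-> exists x y, A x /\ B y /\ a*x + b*y = n.
Proof.
move=> a0 b0; split.
  by move=> /existsP [x /existsP [y /and3P [Ax By /eqP E]]]; exists x, y.
move=> [x [y [Ax [By E]]]].
have hx : x < n.+1 by rewrite ltnS -E; nia.
have hy : y < n.+1 by rewrite ltnS -E; nia.
apply/existsP; exists (Ordinal hx); apply/existsP; exists (Ordinal hy).
by rewrite /= Ax By E eqxx.
Qed.

Lemma gluingC a b (A B : pred nat) n : 0 < a -> 0 < b ->
  gluing a A b B n = gluing b B a A n.
Proof.
move=> a0 b0; apply/idP/idP.
  move/(gluingP _ _ _ _ _ a0 b0) => [x [y [Ax [By E]]]].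
  by apply/(gluingP _ _ _ _ _ b0 a0); exists y, x; rewrite addnC.
move/(gluingP _ _ _ _ _ b0 a0) => [x [y [Ax [By E]]]].
by apply/(gluingP _ _ _ _ _ a0 b0); exists y, x; rewrite addnC.
Qed.

Lemma ns_mul (S : pred nat) k x : numerical_semigroup S -> S x -> S (x * k).
Proof.
move=> [S0 SD _] Sx; elim: k => [|k IH]; first by rewrite muln0.
by rewrite mulnS SD.
Qed.


Definition TT a b (S2 : pred nat) : pred nat := gluing a (fun _ => true) b S2.
Definition AA a b S2 : pred nat :=
  fun j => TT a b S2 j && ~~ ((a <= j) && TT a b S2 (j - a)).
Definition UU a (S1 : pred nat) : pred nat := fun i => (a %| i) && S1 (i %/ a).

Lemma TT_add a b S2 m k : 0 < a -> 0 < b -> TT a b S2 m -> TT a b S2 (m + a * k).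
Proof.
move=> a0 b0 /(gluingP _ _ _ _ _ a0 b0) [x [y [_ [Sy E]]]].
apply/(gluingP _ _ _ _ _ a0 b0); exists (x + k), y; split=> //; split=> //.
by rewrite -E mulnDr addnAC.
Qed.

Lemma TT_cof a b S2 : 0 < a -> 0 < b -> coprime a b -> numerical_semigroup S2 ->
  exists C, forall m, C <= m -> TT a b S2 m.
Proof.
move=> a0 b0 cop [_ _ [c2 Hc2]].
case: (egcdnP a b0) => km kn E _.
have g1 : gcdn b a = 1 by rewrite gcdnC; apply/eqP.
rewrite g1 in E.
have Hu : (b * km) %% a = 1 %% a by rewrite mulnC E modnMDl.
exists (b * (c2 * a + a)) => m Hm.
set y := c2 * a + (m * km) %% a.
have yle : y <= c2 * a + a by rewrite leq_add2l ltnW // ltn_mod.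
have bym : b * y <= m by apply: leq_trans Hm; rewrite leq_mul2l yle orbT.
have Sy : S2 y by apply: Hc2; rewrite /y; nia.
have mody : m == b * y %[mod a].
  rewrite /y mulnDr mulnA modnMDl modnMmr mulnA (mulnC b m) -mulnA.
  by rewrite -modnMmr Hu modnMmr muln1.
rewrite eqn_mod_dvd // in mody.
apply/(gluingP _ _ _ _ _ a0 b0); exists ((m - b * y) %/ a), y; split=> //; split=> //.
by rewrite mulnC divnK // subnK.
Qed.


Lemma AA_uniq a b S2 j j' : 0 < a -> 0 < b -> AA a b S2 j -> AA a b S2 j' ->
  j = j' %[mod a] -> j = j'.
Proof.
move=> a0 b0.
wlog le : j j' / j <= j'.
  move=> H Aj Aj' E; case: (leqP j j') => h; first exact: H.
  by apply/esym/H => //; apply: ltnW.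
move=> /andP [Tj _] /andP [_ nA'] E.
case: (ltngtP j j') le => // lt _.
have : a %| j' - j.
 rewrite -eqn_mod_dvd. by rewrite E. by apply ltnW.
move=> /dvdnP [[|k] Ek].
  by move: Ek; rewrite mul0n => /eqP; rewrite subn_eq0 leqNgt lt.
have := @TT_add _ _ _ _ k a0 b0 Tj.
have e1 : j' = j + a * k + a.
  rewrite -addnA -mulnSr mulnC -Ek subnKC //. by apply ltnW.
rewrite e1 addnK in nA' => T2.
case/negP: nA'. rewrite T2 andbT.
by rewrite leq_addl.
Qed.


Lemma S_of a b S1 S2 n j : 0 < a -> 0 < b -> AA a b S2 j -> UU a S1 (n - j) ->
  j <= n -> gluing a S1 b S2 n.
Proof.
move=> a0 b0 /andP [Tj nA] /andP [dv S1z] jn.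
move: Tj => /(gluingP _ _ _ _ _ a0 b0) [[|x'] [y' [_ [Sy Ej]]]]; last first.
  case/negP: nA; apply/andP; split; first by rewrite -Ej mulnS -addnA leq_addr.
  apply/(gluingP _ _ _ _ _ a0 b0); exists x', y'; split=> //; split=> //.
  by rewrite -Ej mulnS -addnA addKn.
apply/(gluingP _ _ _ _ _ a0 b0); exists ((n - j) %/ a), y'; split=> //; split=> //.
rewrite muln0 add0n in Ej.
by rewrite mulnC divnK // Ej subnK.
Qed.

Lemma S_ex a b S1 S2 n : 0 < a -> 0 < b -> coprime a b -> numerical_semigroup S1 ->
  S1 b -> gluing a S1 b S2 n -> exists j, j <= n /\ AA a b S2 j /\ UU a S1 (n - j).
Proof.
move=> a0 b0 cop NS1 S1b /(gluingP _ _ _ _ _ a0 b0) [x [y [S1x [S2y En]]]].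
pose P := fun m => TT a b S2 m && (m == n %[mod a]).
have byn : b * y = n %[mod a] by rewrite -En (mulnC a) modnMDl.
have exP : exists m, P m.
  exists (b * y); rewrite /P byn eqxx andbT.
  by apply/(gluingP _ _ _ _ _ a0 b0); exists 0, y; rewrite muln0.
case: (ex_minnP exP) => m /andP [Tm /eqP Em] mmin.
move: (Tm) => /(gluingP _ _ _ _ _ a0 b0) [x' [y' [_ [S2y' Em']]]].
have x'0 : x' = 0.
  case: x' Em' => // x' Em'.
  have : m <= b * y'.
    apply: mmin; rewrite /P; apply/andP; split.
      by apply/(gluingP _ _ _ _ _ a0 b0); exists 0, y'; rewrite muln0.
    by rewrite -Em -Em' (mulnC a) modnMDl.
  rewrite -Em' => h; nia.
rewrite x'0 muln0 add0n in Em'.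
have mby : m <= b * y.
  by apply: mmin; rewrite /P byn eqxx andbT; apply/(gluingP _ _ _ _ _ a0 b0); exists 0, y; rewrite muln0.
have yy : y' <= y by rewrite -(leq_pmul2l b0) Em'.
have : a %| b * (y - y').
  by rewrite mulnBr -eqn_mod_dvd ?leq_mul2l ?yy ?orbT // byn -Em -Em'.
rewrite Gauss_dvdr // => /dvdnP [k Ek].
have mn : m <= n by rewrite (leq_trans mby) // -En leq_addl.
have nm : n - m = a * (x + b * k).
  rewrite -En -Em' mulnDr -addnBA; last by rewrite leq_mul2l yy orbT.
  by rewrite -mulnBr Ek; congr (_ + _); rewrite mulnA mulnC.
exists m; split=> //; split.
  rewrite /AA Tm /=; apply/negP => /andP [am Tma].
  have : m <= m - a.
    apply: mmin; rewrite /P Tma /=; apply/eqP.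
    by rewrite -Em -{2}(subnK am) modnDr.
  move=> h; clear -h am a0; lia.
rewrite /UU nm dvdn_mulr //= mulKn //.
move: (NS1) => [_ SD _]; apply: SD => //.
exact: ns_mul.
Qed.

Local Open Scope ring_scope.

Definition chi (T : pred nat) (N : nat) : {poly int} := \poly_(i < N) ((T i)%:Z).

Lemma coef1Xn (a : nat) (p : {poly int}) i :
  ((1 - 'X^a) * p)`_i = p`_i - (if (a <= i)%N then p`_(i - a) else 0).
Proof.
rewrite mulrBl mul1r coefB mulrC coefMXn ltnNge.
by case: (a <= i)%N.
Qed.

Lemma coefM_eq (p p' F F' : {poly int}) n :
  (forall i, (i <= n)%N -> p`_i = p'`_i) -> (forall i, (i <= n)%N -> F`_i = F'`_i) ->
  (p * F)`_n = (p' * F')`_n.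
Proof.
move=> Hp HF; rewrite !coefM; apply: eq_bigr => i _.
have ii := ltn_ord i; rewrite ltnS in ii.
by rewrite Hp // HF // leq_subr.
Qed.

Lemma PTE (T : pred nat) i :
  PT T i = (T i)%:Z - (if i is k.+1 then (T k)%:Z else 0).
Proof. by []. Qed.

Lemma chi_PT (T : pred nat) N i : (i < N)%N ->
  ((1 - 'X^1) * chi T N)`_i = PT T i.
Proof.
move=> iN; rewrite coef1Xn /chi !coef_poly iN.
case: i iN => [|i] iN //=.
by rewrite subn1 /= (ltnW iN).
Qed.

Lemma chi_U (S1 : pred nat) a N i : (0 < a)%N -> (i < N)%N ->
  ((1 - 'X^a) * chi (UU a S1) N)`_i = subst_pow a (PT S1) i.
Proof.
move=> a0 iN; rewrite coef1Xn /chi !coef_poly iN /subst_pow.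
have iaN : (i - a < N)%N by apply: leq_ltn_trans iN; apply: leq_subr.
rewrite iaN.
case: (boolP (a %| i)%N) => [/dvdnP [m Em] | ndv].
  subst i; rewrite mulnK // /UU dvdn_mull //= mulnK //.
  case: m iN iaN => [|m] iN iaN.
    by rewrite mul0n leqNgt a0.
  by rewrite mulSn leq_addr addKn dvdn_mull //= mulnK.
rewrite /UU; case: ifP => ai.
  have -> : (a %| i - a)%N = (a %| i)%N by rewrite -{2}(subnK ai) dvdn_addl.
  by rewrite (negbTE ndv).
by rewrite /UU (negbTE ndv).
Qed.


Lemma chi_AA a b S2 N i : (0 < a)%N -> (0 < b)%N -> (i < N)%N ->
  ((1 - 'X^a) * chi (TT a b S2) N)`_i = (AA a b S2 i)%:Z.
Proof.
move=> a0 b0 iN; rewrite coef1Xn /chi !coef_poly iN /AA.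
have iaN : (i - a < N)%N by apply: leq_ltn_trans iN; apply: leq_subr.
rewrite iaN.
case: ifP => ai /=; last by rewrite subr0 andbT.
case: (boolP (TT a b S2 (i - a)%N)) => Tia /=.
  have Ti : TT a b S2 i.
    by have := @TT_add _ _ _ _ 1 a0 b0 Tia; rewrite muln1 subnK.
  by rewrite Ti subrr.
by rewrite subr0 andbT.
Qed.

Lemma sum_AU a b S1 S2 i : (0 < a)%N -> (0 < b)%N -> coprime a b ->
  numerical_semigroup S1 -> S1 b ->
  \sum_(j < i.+1) (AA a b S2 j)%:Z * (UU a S1 (i - j)%N)%:Z = (gluing a S1 b S2 i)%:Z.
Proof.
move=> a0 b0 cop NS1 S1b.
have tE : forall j : 'I_i.+1, (AA a b S2 j)%:Z * (UU a S1 (i - j)%N)%:Z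
     = (AA a b S2 j && UU a S1 (i - j)%N)%:Z.
  by move=> j; case: (AA a b S2 j); case: (UU a S1 (i - j)%N).
under eq_bigr => j _ do rewrite tE.
case: (boolP (gluing a S1 b S2 i)) => Si.
  have [j0 [j0i [A0 U0]]] := @S_ex _ _ _ _ _ a0 b0 cop NS1 S1b Si.
  have j0i' : (j0 < i.+1)%N by [].
  rewrite (bigD1 (Ordinal j0i')) //= A0 U0 /= big1 ?addr0 // => j nj.
  case: (boolP (AA a b S2 j && UU a S1 (i - j)%N)) => //= /andP [Aj Uj].
  have ji : (j <= i)%N by rewrite -ltnS ltn_ord.
  have m1 : (i == j %[mod a])%N by rewrite eqn_mod_dvd //; case/andP: Uj.
  have m2 : (i == j0 %[mod a])%N by rewrite eqn_mod_dvd //; case/andP: U0.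
  have := @AA_uniq _ _ _ _ _ a0 b0 Aj A0; rewrite -(eqP m1) -(eqP m2) => /(_ erefl) e.
  by case/eqP: nj; apply: val_inj.
rewrite big1 // => j _.
case: (boolP (AA a b S2 j && UU a S1 (i - j)%N)) => //= /andP [Aj Uj].
have ji : (j <= i)%N by rewrite -ltnS ltn_ord.
by case/negP: Si; apply: (@S_of _ _ _ _ _ _ a0 b0 Aj Uj ji).
Qed.


Lemma part (S1 S2 : pred nat) (a b : nat) :
  numerical_semigroup S1 -> numerical_semigroup S2 ->
  (0 < a)%N -> (0 < b)%N -> coprime a b -> S1 b ->
  exists q : {poly int},
     (forall n, polyXser q (subst_pow a (PT S1)) n = PT (gluing a S1 b S2) n) /\
     q`_0 = 1 /\ q \is monic /\ alternating_coefs q.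
Proof.
move=> NS1 NS2 a0 b0 cop S1b.
set T := TT a b S2.
have [C HC] := @TT_cof _ _ S2 a0 b0 cop NS2.
pose Pd := fun d => [forall k : 'I_C.+1, (d <= k)%N ==> T k].
have exd : exists d, Pd d.
  exists C; apply/forallP => k; apply/implyP => Ck; exact: HC.
case: (ex_minnP exd) => d Pdd dmin.
have allT : forall m, (d <= m)%N -> T m.
  move=> m dm; case: (leqP m C) => mC; last by apply: HC; apply: ltnW.
  have mC' : (m < C.+1)%N by [].
  by move/forallP: Pdd => /(_ (Ordinal mC')) /implyP; apply.
have T0 : T 0%N.
  apply/(gluingP _ _ _ _ _ a0 b0); exists 0%N, 0%N; split=> //; split.
    by case: NS2.
  by rewrite !muln0.
have Td1 : if d is k.+1 then ~~ T k else True.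
  case: d Pdd dmin allT => // k _ dmin allT; apply/negP => Tk.
  have : (k.+1 <= k)%N.
    apply: dmin; apply/forallP => j; apply/implyP => kj.
    case: (ltngtP k j) kj => //.
      by move=> kj _; apply: allT.
    by move=> <-.
  by rewrite ltnn.
pose q : {poly int} := \poly_(i < d.+1) PT T i.
have qE : forall i, q`_i = PT T i.
  move=> i; rewrite coef_poly; case: ltnP => // di.
  rewrite PTE; case: i di => [|i] di //.
  by rewrite allT ?(ltnW di) // allT.
have qd : q`_d = 1.
  rewrite qE PTE allT //; move: Td1; case: (d) => [|k] //=.
  by move/negbTE => ->.
exists q; split; last split; last split.
-
  move=> n; set N := n.+1.
  rewrite /polyXser.
  transitivity ((q * \poly_(i < N) subst_pow a (PT S1) i)`_n).
    rewrite coefM; apply: eq_bigr => i _.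
    by rewrite [X in _ = _ * X]coef_poly /N ltnS leq_subr.
  transitivity ((((1 - 'X^1) * chi T N) * ((1 - 'X^a) * chi (UU a S1) N))`_n).
    apply: (@coefM_eq _ ((1 - 'X^1) * chi T N)) => i iN.
      by rewrite chi_PT // qE.
    by rewrite coef_poly /N ltnS iN chi_U.
  have re : forall A B C0 D : {poly int}, A * B * (C0 * D) = A * ((C0 * B) * D).
    by move=> A B C0 D; rewrite -mulrA [B * _]mulrA [B * C0]mulrC.
  rewrite re.
  transitivity (((1 - 'X^1) * chi (gluing a S1 b S2) N)`_n); last by rewrite chi_PT.
  apply: (@coefM_eq _ (1 - 'X^1)) => // i iN.
  rewrite [in RHS]/chi coef_poly ltnS iN.
  rewrite -(@sum_AU _ _ _ S2 i a0 b0 cop NS1 S1b).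
  transitivity ((chi (AA a b S2) N * chi (UU a S1) N)`_i).
    apply: (@coefM_eq _ (chi (AA a b S2) N)) => // j ji.
    have jN : (j < N)%N by rewrite /N ltnS (leq_trans ji iN).
    by rewrite chi_AA // /chi coef_poly jN.
  rewrite coefM; apply: eq_bigr => j _.
  have ji : (j <= i)%N by rewrite -ltnS ltn_ord.
  rewrite /chi !coef_poly ltnS (leq_trans ji iN) ltnS (leq_trans (leq_subr _ _) iN).
  by [].
- by rewrite qE PTE T0.
- rewrite monicE lead_coefE size_poly_eq //=.
    by apply/eqP.
  by rewrite -qE qd.
- split.
    move=> i; rewrite qE PTE.
    case: i => [|i]; case: (T _) => //=; try case: (T _) => //=; by auto.
  move=> i j ij; rewrite !qE => nzi nzj zk.
  have cst : forall t, (i + t < j)%N -> T (i + t)%N = T i.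
    elim=> [|t IH] h; first by rewrite addn0.
    have h1 : (i < i + t.+1 < j)%N by rewrite h andbT addnS ltnS leq_addr.
    have h2 : (i + t < j)%N by apply: ltnW; rewrite -addnS.
    have := zk _ h1; rewrite qE PTE addnS (IH h2).
    by case: (T _); case: (T i).
  case: j ij nzj zk cst => // j ij nzj zk cst.
  have Tj : T j = T i.
    have ij' : (i <= j)%N by rewrite -ltnS.
    have e := cst (j - i)%N; rewrite subnKC // in e; exact: e.
  move: nzi nzj; rewrite !PTE Tj.
  case: i ij zk cst Tj => [|i] ij zk cst Tj;
    case: (T j.+1); case: (T _) => //=; try case: (T _) => //=.
Qed.


Theorem corollary6 (S1 S2 : pred nat) (a1 a2 : nat) :
  numerical_semigroup S1 -> numerical_semigroup S2 ->
  (0 < a1)%N -> (0 < a2)%N -> coprime a1 a2 ->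
  S1 a2 -> S2 a1 ->
  let S := gluing a1 S1 a2 S2 in
  (exists q : {poly int},
     polyXser q (subst_pow a1 (PT S1)) = PT S /\
     q`_0 = 1 /\ q \is monic /\ alternating_coefs q) /\
  (exists q : {poly int},
     polyXser q (subst_pow a2 (PT S2)) = PT S /\
     q`_0 = 1 /\ q \is monic /\ alternating_coefs q).
Proof.
move=> NS1 NS2 a10 a20 cop S1a2 S2a1 S.
split.
  have [q1 [E1 R1]] := @part S1 S2 a1 a2 NS1 NS2 a10 a20 cop S1a2.
  by exists q1; split=> //; apply: functional_extensionality => n; exact: E1.
have cop' : coprime a2 a1 by rewrite coprime_sym.
have [q2 [E2 R2]] := @part S2 S1 a2 a1 NS2 NS1 a20 a10 cop' S2a1.
exists q2; split=> //; apply: functional_extensionality => n.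
rewrite E2 /S /PT (gluingC _ _ _ _ _ a20 a10).
by case: n => [|n] //=; rewrite (gluingC _ _ _ _ _ a20 a10).
Qed.
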